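(* Let $n\ge 4$ and let $k$ be a positive integer. Then $|U(n,2)|=\frac12 C_{4k}^{2k}C_{4k^2}^{k}$ if $n=4k$; $|U(n,2)|=C_{4k+1}^{2k}C_{4k^2+2k}^{k}$ if $n=4k+1$; and $|U(n,2)|=0$ if $n$ is not of the form $4k$ or $4k+1$.
   Context: Let $S=K[x_1,\ldots,x_n]$ over a field $K$; $C_a^b$ is the binomial coefficient; $sm(S)_d$ is the set of square-free monomials of degree $d$. For a set $A$ of square-free monomials, $\sqcup(A)=\{gx_i\mid g\in A,\ x_i\nmid g\}$, $\sqcap(A)=\{h\ne1\mid h=g/x_i,\ g\in A,\ x_i\mid g\}$; $A\subseteq sm(S)_d$ is $(n,d)^{th}$ perfect if $\sqcup(A)=sm(S)_{d+1}$ and $\sqcap(A)=sm(S)_{d-1}$; $N_{(n,d)}$ is the least cardinality of an $(n,d)^{th}$ perfect set. With $\sigma$ the bijection from square-free monomials to subsets of $[n]$, the facet complex $\delta_{\mathcal{F}}(I)$ of a square-free monomial ideal $I$ has facets $\sigma(g)$, $g\in G(I)$ (the minimal generating set), the Stanley–Reisner complex is $\delta_{\mathcal{N}}(I)=\{\sigma(g)\mid g\notin I\}$, and $I$ is an $f$-ideal if both complexes have the same $f$-vector. An ideal is of degree $d$ if all elements of $G(I)$ have degree $d$. $U(n,2)$ is the set of $f$-ideals $I$ of $S$ of degree $2$ such that $G(I)$ contains an $(n,2)^{th}$ perfect set of cardinality $N_{(n,2)}$. *)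

(* Defs.v *)
(* Square-free monomials of K[x_1..x_n] are identified with
   subsets of 'I_n (the bijection sigma); a square-free monomial ideal I is
   represented by its minimal generating set G(I) : {set {set 'I_n}}. *)
From mathcomp Require Import all_boot all_order.
Set Implicit Arguments. Unset Strict Implicit. Unset Printing Implicit Defensive.

Section SqFree.
Variable n : nat.
Local Notation mono := {set 'I_n}.

Definition sm (d : nat) : {set mono} := [set g : mono | #|g| == d].

Definition sqcup (A : {set mono}) : {set mono} :=
  [set h : mono | [exists g in A, exists i, (i \notin g) && (h == i |: g)]].

Definition sqcap (A : {set mono}) : {set mono} :=
  [set h : mono | (h != set0) && [exists g in A, exists i in g, h == g :\ i]].

Definition perfect (d : nat) (A : {set mono}) : bool :=
  [&& A \subset sm d, sqcup A == sm d.+1 & sqcap A == sm d.-1].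

(* N_(n,d): least cardinality of an (n,d)-th perfect set
   (default value (2^n).+1 exceeds every possible cardinality) *)
Definition Nperf (d : nat) : nat :=
  \big[minn/(2 ^ n).+1]_(A : {set mono} | perfect d A) #|A|.

Definition inI (G : {set mono}) (g : mono) : bool :=
  [exists h in G, h \subset g].

Definition facet_cx (G : {set mono}) : {set mono} :=
  [set F : mono | [exists g in G, F \subset g]].

Definition sr_cx (G : {set mono}) : {set mono} :=
  [set F : mono | ~~ inI G F].

(* f_(i-1) of a complex: number of faces with i vertices *)
Definition fnum (C : {set mono}) (i : nat) : nat := #|[set F in C | #|F| == i]|.

(* (faces have at most n vertices, so sizes i <= n cover the whole f-vector) *)
Definition f_ideal (G : {set mono}) : bool :=
  [forall i : 'I_n.+1, fnum (facet_cx G) i == fnum (sr_cx G) i].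

(* U(n,2), as the set of minimal generating sets G(I) *)
Definition U2 : {set {set mono}} :=
  [set G : {set mono} | [&& G \subset sm 2,
     f_ideal G &
     [exists A : {set mono}, [&& A \subset G, perfect 2 A & #|A| == Nperf 2]]]].
End SqFree.

(* Main.v *)
Require Import Defs.
From mathcomp Require Import all_boot all_order zify.
Set Implicit Arguments. Unset Strict Implicit. Unset Printing Implicit Defensive.

Lemma minbig (U : finType) (P : pred U) (f : U -> nat) x0 j : P j -> \big[minn/x0]_(i | P i) f i <= f j.
Proof.
move=> Pj; rewrite unlock; have : j \in index_enum U by rewrite mem_index_enum.
elim: (index_enum U) => //= a r IH; rewrite inE => /orP[/eqP <-|jr].
  by rewrite Pj geq_minl.
by case: (P a); rewrite ?geq_min IH ?orbT.
Qed.

Lemma ar3 k a b c d : 0 < k -> a + b = k + k -> a + c = k + k ->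
  (c + d = k + k \/ c + d = k + k + 1) -> a * b + c * d <= k ->
  b = 0 \/ (a = 0 /\ d = 0).
Proof.
move=> k0 e1 e2 e3 h.
have bc : b = c by lia.
rewrite -bc in h e3.
have [->|b0] := eqVneq b 0; first by left.
have [b1|b1] := leqP b (k + k - 1).
  exfalso.
  have [t bt] : exists t, b = t.+1 by exists b.-1; lia.
  rewrite bt in h e1 e3 b1; case: e3 => e3; nia.
right; case: e3 => e3; nia.
Qed.
Lemma bin2x n : 2 * 'C(n, 2) = n * (n - 1).
Proof.
elim: n => // n IH; rewrite binS bin1 mulnDr IH subSS subn0.
case: n {IH} => [|n]; first by []. rewrite subSS subn0. nia.
Qed.

Section Work.
Variable n : nat.
Local Notation T := 'I_n.
Local Notation mono := {set 'I_n}.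

Lemma in_sm d (g : mono) : (g \in sm n d) = (#|g| == d).
Proof. by rewrite inE. Qed.

Lemma two_sub (X : mono) : 2 <= #|X| -> exists x y, [/\ x != y, x \in X & y \in X].
Proof.
move=> h; have /card_gt0P[x xX] : 0 < #|X| by lia.
have : 0 < #|X :\ x| by move: h; rewrite (cardsD1 x X) xX; lia.
move=> /card_gt0P[y]; rewrite !inE => /andP[yx yX].
by exists x, y; rewrite eq_sym yx.
Qed.

Lemma pair_other (e : mono) w : #|e| = 2 -> w \in e -> exists u, u != w /\ e = [set u; w].
Proof.
move=> /eqP/cards2P[a [b [ab ->]]]; rewrite in_set2 => /orP[]/eqP->.
  by exists b; rewrite eq_sym ab setUC.
by exists a.
Qed.

Lemma in3 (a x y z : T) : a \in [set x; y; z] -> [\/ a = x, a = y | a = z].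
Proof.
rewrite !inE; case: (a =P x) => [->|_]; first by constructor 1.
case: (a =P y) => [->|_]; first by constructor 2.
by case: (a =P z) => [->|_] //; constructor 3.
Qed.

Lemma sub3 (g : mono) x y z : g \subset [set x; y; z] -> #|g| = 2 ->
  [\/ g = [set x; y], g = [set x; z] | g = [set y; z]].
Proof.
move=> sg /eqP/cards2P[a [b [ab eg]]]; subst g.
have ha : a \in [set x; y; z] by apply: (subsetP sg); rewrite !inE eqxx.
have hb : b \in [set x; y; z] by apply: (subsetP sg); rewrite !inE eqxx orbT.
move: ab; case/in3: ha => ->; case/in3: hb => ->; rewrite ?eqxx //= => _.
- by constructor 1.
- by constructor 2.
- by constructor 1; rewrite setUC.
- by constructor 3.
- by constructor 2; rewrite setUC.
- by constructor 3; rewrite setUC.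
Qed.

Lemma ar0 a D m : (a + D = m + m \/ a + D = m + m + 1) ->
  a * D <= m * (a + D - m) /\ (a * D = m * (a + D - m) -> D = m \/ a = m).
Proof.
wlog le : a D / a <= D.
  move=> W h; have [le|le] := leqP a D; first exact: W.
  have := W D a (ltnW le); rewrite addnC mulnC; case/(_ h) => h1 h2; split=> // e.
  by case: (h2 e) => ->; auto.
have [t ->] : exists t, D = a + t by exists (D - a); lia.
case=> e; rewrite e; [have -> : m + m - m = m by lia | have -> : m + m + 1 - m = m + 1 by lia];
 have := congr1 (fun x => x * x) e => /= sq; split; try nia.
Qed.

Definition AS (S : mono) : {set mono} :=
  [set e in sm n 2 | (e \subset S) || (e \subset ~: S)].
Definition pairs (X Y : mono) : {set mono} :=
  [set [set p.1; p.2] | p in setX X Y].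

Lemma pairs_card (X Y : mono) : X \subset ~: Y -> #|pairs X Y| = #|X| * #|Y|.
Proof.
move=> XY; rewrite card_in_imset ?cardsX // => [[x1 y1] [x2 y2]].
rewrite !inE /= => /andP[x1X y1Y] /andP[x2X y2Y] e.
have nxy : forall x y, x \in X -> y \in Y -> (x == y) = false.
  move=> x y xX yY; apply/negbTE/eqP=> exy; subst y.
  by move: (subsetP XY x xX); rewrite inE yY.
have : x1 \in [set x2; y2] by rewrite -e !inE eqxx.
rewrite !inE (nxy x1 y2) // orbF => /eqP ex; subst x2.
have : y1 \in [set x1; y2] by rewrite -e !inE eqxx orbT.
by rewrite !inE eq_sym (nxy x1 y1) // => /eqP ->.
Qed.

Lemma AS_sub (S : mono) : AS S \subset sm n 2.
Proof. by apply/subsetP=> e; rewrite inE => /andP[]. Qed.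

Lemma AS_compl (S : mono) : sm n 2 :\: AS S = pairs S (~: S).
Proof.
apply/setP=> e; rewrite !inE; apply/idP/idP.
  case/andP=> nas c2; move: nas; rewrite c2 /= => /norP[ns nc].
  case/cards2P: c2 => a [b [ab ee]]; subst e.
  apply/imsetP; case aS: (a \in S).
    have bS : b \notin S.
      by apply/negP=> bS; move: ns; rewrite subUset !sub1set aS bS.
    by exists (a, b); rewrite // !inE aS.
  have bS : b \in S.
    by apply/negPn/negP=> bS; move: nc; rewrite subUset !sub1set !inE aS bS.
  by exists (b, a); rewrite ?inE ?aS ?bS // setUC.
case/imsetP=> -[x y]; rewrite !inE /= => /andP[xS yS] ->.
have xy : x != y by apply/eqP=> exy; subst y; rewrite xS in yS.
rewrite cards2 xy /= andbT !subUset !sub1set !inE xS (negbTE yS).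
done.
Qed.

Lemma AS_C (S : mono) : AS (~: S) = AS S.
Proof. by apply/setP=> e; rewrite !inE setCK orbC. Qed.

Lemma card_sm2 : #|sm n 2| = 'C(n, 2).
Proof. by rewrite /sm card_draws card_ord. Qed.

Lemma card_AS (S : mono) : #|AS S| + #|S| * (n - #|S|) = 'C(n, 2).
Proof.
have hC : #|~: S| = n - #|S| by rewrite cardsCs setCK card_ord.
rewrite -hC -pairs_card ?setCK // -AS_compl -card_sm2.
by rewrite -(cardsID (AS S) (sm n 2)) (setIidPr (AS_sub S)).
Qed.


Lemma card_setI_sum (X Y : mono) : #|X :&: Y| = \sum_(w in Y) (w \in X).
Proof.
rewrite -sum1_card (eq_bigl (fun w => (w \in Y) && (w \in X))); last first.
  by move=> w; rewrite inE andbC.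
by rewrite big_mkcondr /=; apply: eq_bigr => w _; case: (w \in X).
Qed.

Lemma card3 (x y v : T) : x != y -> x != v -> y != v -> #|[set x; y; v]| = 3.
Proof.
move=> xy xv yv; have -> : [set x; y; v] = v |: [set x; y].
  by apply/setP=> z; rewrite !inE; case: (z == x); case: (z == y); case: (z == v).
by rewrite cardsU1 cards2 xy !inE (eq_sym v x) (eq_sym v y) (negbTE xv) (negbTE yv).
Qed.

Section Mantel.
Variable A : {set mono}.
Hypothesis A2 : A \subset sm n 2.
Hypothesis P3 : forall F : mono, #|F| = 3 -> exists2 g, g \in A & g \subset F.

Let H := sm n 2 :\: A.
Let Nb (w : T) : mono := [set u | [set u; w] \in H].

Lemma Nb_nw w : w \notin Nb w.
Proof. by rewrite !inE setUid cards1 andbF. Qed.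

Lemma inH (e : mono) : e \in H -> #|e| = 2.
Proof. by rewrite !inE => /andP[_ /eqP]. Qed.

Lemma deg w : #|[set e in H | w \in e]| = #|Nb w|.
Proof.
have -> : [set e in H | w \in e] = [set [set u; w] | u in Nb w].
  apply/setP=> e; rewrite inE; apply/andP/imsetP.
    case=> eH we; have [u [uw ee]] := pair_other (inH eH) we.
    by exists u; rewrite // inE -ee.
  by case=> u; rewrite inE => uH ->; split=> //; rewrite !inE eqxx orbT.
rewrite card_in_imset // => u1 u2 h1 h2 e.
have : u1 \in [set u2; w] by rewrite -e !inE eqxx.
rewrite !inE => /orP[/eqP //|/eqP ew]; subst u1; by rewrite (negbTE (Nb_nw w)) in h1.
Qed.

Lemma tri v x y : x \in Nb v -> y \in Nb v -> x != y -> [set x; y] \notin H.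
Proof.
move=> xN yN xy; apply/negP=> xyH.
have xv : x != v by apply/eqP=> e; subst x; rewrite (negbTE (Nb_nw v)) in xN.
have yv : y != v by apply/eqP=> e; subst y; rewrite (negbTE (Nb_nw v)) in yN.
have [g gA gs] := P3 (card3 xy xv yv).
have g2 : #|g| = 2 by apply/eqP; rewrite -in_sm (subsetP A2).
have nA : forall e, e \in H -> e \notin A by move=> e; rewrite inE => /andP[].
move: xN yN; rewrite !inE => xN yN.
case: (sub3 gs g2) => eg; subst g.
- by move: (nA _ xyH); rewrite gA.
- by move: xN; rewrite gA.
- by move: yN; rewrite gA.
Qed.


Lemma card_sep (U : finType) (X : {set U}) (P : pred U) :
  #|[set x in X | P x]| = \sum_(x in X) P x.
Proof.
rewrite -sum1_card (eq_bigl (fun w => (w \in X) && P w)); last first.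
  by move=> w; rewrite inE.
by rewrite big_mkcondr /=; apply: eq_bigr => w _; case: (P w).
Qed.

Variable m : nat.
Hypothesis hm : n = m + m \/ n = m + m + 1.
Hypothesis n0 : 0 < n.

Lemma mantel : 'C(n, 2) <= #|A| + m * (n - m) /\
  (#|A| + m * (n - m) = 'C(n, 2) -> exists S : mono, #|S| = m /\ A = AS S).
Proof.
have cardH : #|A| + #|H| = 'C(n, 2).
  by rewrite -card_sm2 -(cardsID A (sm n 2)) (setIidPr A2).
pose x0 : T := Ordinal n0.
case: (@arg_maxnP T x0 xpredT (fun w => #|Nb w|) isT) => v _ vmax.
set N := Nb v; set D := #|N|; set W := ~: N.
have cardW : #|W| = n - D by rewrite cardsCs setCK card_ord.
have Dn : D <= n by rewrite -[n]card_ord max_card.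
have st1 : forall e, e \in H -> 1 <= #|e :&: W|.
  move=> e eH; rewrite lt0n cards_eq0; apply/negP=> /eqP e0.
  have eN : e \subset N.
    apply/subsetP=> z ze; apply/negPn/negP=> zN.
    have : z \in e :&: W by rewrite in_setI ze in_setC zN.
    by rewrite e0 inE.
  have /eqP/cards2P[x [y [xy ee]]] := inH eH; subst e.
  have xN : x \in N by apply: (subsetP eN); rewrite !inE eqxx.
  have yN : y \in N by apply: (subsetP eN); rewrite !inE eqxx orbT.
  by move: (tri xN yN xy); rewrite eH.
have st2 : #|H| <= \sum_(e in H) #|e :&: W|.
  by rewrite -sum1_card; apply: leq_sum.
have st3 : \sum_(e in H) #|e :&: W| = \sum_(w in W) #|Nb w|.
  under eq_bigr => e _ do rewrite card_setI_sum.
  rewrite exchange_big; apply: eq_bigr => w _.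
  by rewrite -deg card_sep.
have st4 : \sum_(w in W) #|Nb w| <= #|W| * D.
  by rewrite -sum_nat_const; apply: leq_sum => w _; exact: vmax.
have [ar1 ar2] : (n - D) * D <= m * (n - D + D - m) /\
   ((n - D) * D = m * (n - D + D - m) -> D = m \/ n - D = m).
  by apply: ar0; rewrite subnK.
rewrite subnK // in ar1 ar2.
split.
  have : #|H| <= m * (n - m) by rewrite -cardW in ar1; lia.
  lia.
move=> eqC.
have eH : #|H| = m * (n - m) by lia.
have s1 : \sum_(e in H) #|e :&: W| = #|H| by rewrite -cardW in ar1; lia.
have s2 : \sum_(w in W) #|Nb w| = #|W| * D by rewrite -cardW in ar1; lia.
have Dm : D = m \/ n - D = m by apply: ar2; rewrite -cardW in ar1 *; lia.
have e1 : forall e, e \in H -> #|e :&: W| = 1.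
  have : \sum_(e in H) (#|e :&: W| - 1) == 0.
    by rewrite sumnB // sum1_card s1 subnn.
  rewrite sum_nat_eq0 => /forallP h e eH'.
  by move: (h e) (st1 e eH'); rewrite eH' /=; lia.
have e2 : forall w, w \in W -> #|Nb w| = D.
  have : \sum_(w in W) (D - #|Nb w|) == 0.
    by rewrite sumnB ?sum_nat_const ?s2 ?subnn // => w _; exact: vmax.
  rewrite sum_nat_eq0 => /forallP h w wW.
  move: (h w) (vmax w isT); rewrite wW /= /D /N /geq => /eqP h1 h2. by apply/eqP; rewrite eqn_leq h2 -subn_eq0 h1.
have NbW : forall w, w \in W -> Nb w = N.
  move=> w wW; apply/eqP; rewrite eqEcard (e2 w wW) leqnn andbT.
  apply/subsetP=> x xN.
  have xw : x != w by apply/eqP=> e; subst x; rewrite (negbTE (Nb_nw w)) in xN.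
  have hx : [set x; w] \in H by move: xN; rewrite inE.
  apply/negPn/negP=> xW.
  have : [set x; w] :&: W = [set x; w].
    apply/setIidPl/subsetP=> z; rewrite in_set2 => /orP[]/eqP->; [rewrite in_setC; exact: xW | exact: wW].
  by move=> hh; move: (e1 _ hx); rewrite hh cards2 xw.
have HE : H = pairs N W.
  apply/setP=> e; apply/idP/idP=> [eH'|].
    have /cards1P[w ew] := introT eqP (e1 e eH').
    have : w \in e :&: W by rewrite ew inE.
    rewrite inE => /andP[we wW].
    have [u [uw ee]] := pair_other (inH eH') we.
    have uN : u \in N.
      apply/negPn/negP=> uW.
      have : u \in e :&: W by rewrite in_setI in_setC uW ee in_set2 eqxx.
      by rewrite ew inE (negbTE uw).
    by apply/imsetP; exists (u, w); rewrite // inE /= uN.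
  case/imsetP=> -[u w]; rewrite inE /= => /andP[uN wW] ->.
  by move: uN; rewrite -(NbW w wW) inE.
have AE : A = AS N.
  apply/setP=> e; case es: (e \in sm n 2).
    have h1 : (e \in A) = (e \notin H) by rewrite !inE -in_sm es andbT negbK.
    have h2 : (e \in AS N) = (e \notin sm n 2 :\: AS N).
      by rewrite in_setD es andbT negbK inE es.
    by rewrite h1 h2 AS_compl -HE.
  apply/idP/idP=> he.
    by move: (subsetP A2 e he); rewrite es.
  by move: (subsetP (AS_sub N) e he); rewrite es.
case: Dm => hD.
  by exists N; rewrite -hD.
exists (~: N); split; first by rewrite cardsCs setCK card_ord.
by rewrite AS_C.
Qed.

End Mantel.


Lemma part3 (S F : mono) : 3 <= #|F| -> exists2 g, g \in AS S & g \subset F.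
Proof.
move=> hF; have := cardsID S F.
have [h2|h2] := leqP 2 #|F :&: S|.
  move=> _; have [x [y [xy xS yS]]] := two_sub h2.
  move: xS yS; rewrite !inE => /andP[xF xS] /andP[yF yS].
  exists [set x; y]; last by rewrite subUset !sub1set xF yF.
  by rewrite !inE cards2 xy subUset !sub1set xS yS.
move=> e; have h3 : 2 <= #|F :\: S| by lia.
have [x [y [xy xS yS]]] := two_sub h3.
move: xS yS; rewrite !inE => /andP[xS xF] /andP[yS yF].
exists [set x; y]; last by rewrite subUset !sub1set xF yF.
by rewrite !inE cards2 xy !subUset !sub1set !inE xS yS orbT.
Qed.

Lemma cover (S : mono) : 2 <= #|S| -> 2 <= #|~: S| -> forall x,
  exists2 g, g \in AS S & x \in g.
Proof.
move=> hS hC x.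
have gen : forall P : mono, 2 <= #|P| -> x \in P -> exists2 y, y != x & y \in P.
  move=> P hP xP; have : 0 < #|P :\ x| by move: hP; rewrite (cardsD1 x P) xP; lia.
  by case/card_gt0P=> y; rewrite !inE => /andP[yx yP]; exists y.
case xS: (x \in S).
  have [y yx yS] := gen S hS xS.
  exists [set x; y]; last by rewrite !inE eqxx.
  by rewrite !inE cards2 (eq_sym x y) yx !subUset !sub1set xS yS.
have xC : x \in ~: S by rewrite inE xS.
have [y yx yS] := gen _ hC xC.
exists [set x; y]; last by rewrite !inE eqxx.
by rewrite !inE cards2 (eq_sym x y) yx /= !subUset !sub1set xC yS orbT.
Qed.

Lemma perfect_AS (S : mono) : 2 <= #|S| -> 2 <= #|~: S| -> perfect 2 (AS S).
Proof.
move=> hS hC; apply/and3P; split; first exact: AS_sub.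
  apply/eqP/setP=> h; rewrite !inE; apply/idP/idP.
    case/existsP=> g /andP[gA /existsP[i /andP[ig /eqP ->]]].
    by rewrite cardsU1 ig (eqP (eq_trans (esym (in_sm 2 g)) (subsetP (AS_sub S) g gA))).
  move=> /eqP h3; have [g gA gh] := part3 S (eq_leq (esym h3)).
  have g2 : #|g| = 2 by apply/eqP; rewrite -in_sm (subsetP (AS_sub S)).
  have : #|h :\: g| == 1 by rewrite cardsD (setIidPr gh) h3 g2.
  case/cards1P=> i hi.
  have : i \in h :\: g by rewrite hi inE.
  rewrite inE => /andP[ig ih].
  apply/existsP; exists g; rewrite gA /=; apply/existsP; exists i.
  rewrite ig /=; apply/eqP/setP=> z; rewrite !inE.
  apply/idP/idP=> [zh|/orP[/eqP->//|zg]]; last exact: (subsetP gh).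
  case zg: (z \in g); first by rewrite orbT.
  have : z \in h :\: g by rewrite inE zg zh.
  by rewrite hi inE => /eqP ->; rewrite eqxx.
apply/eqP/setP=> h; rewrite !inE; apply/idP/idP.
  case/andP=> _ /existsP[g /andP[gA /existsP[i /andP[ig /eqP ->]]]].
  have := cardsD1 i g; rewrite ig (eqP (eq_trans (esym (in_sm 2 g)) (subsetP (AS_sub S) g gA))).
  by move=> e; rewrite -(eqn_add2l 1) -e.
case/cards1P=> x ->; rewrite -cards_eq0 cards1 /=.
have [g gA xg] := cover hS hC x.
have g2 : #|g| = 2 by apply/eqP; rewrite -in_sm (subsetP (AS_sub S)).
have [y [yx ge]] := pair_other g2 xg.
apply/existsP; exists g; rewrite gA /=; apply/existsP; exists y.
rewrite ge !inE eqxx /=; apply/eqP/setP=> z; rewrite !inE.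
case: (z =P x) => [->|_]; first by rewrite orbT andbT eq_sym yx.
by case: (z == y); rewrite ?andbF ?andbT.
Qed.

Lemma AS_sub' (A : {set mono}) : perfect 2 A -> A \subset sm n 2.
Proof. by case/and3P. Qed.

Lemma perfect_P3 (A : {set mono}) : perfect 2 A ->
  forall F : mono, #|F| = 3 -> exists2 g, g \in A & g \subset F.
Proof.
case/and3P=> _ /eqP hu _ F hF.
have : F \in sqcup A by rewrite hu inE hF.
rewrite inE => /existsP[g /andP[gA /existsP[i /andP[ig /eqP ->]]]].
by exists g; rewrite // subsetUr.
Qed.


Section Count.
Variable m : nat.
Hypothesis hm : n = m + m \/ n = m + m + 1.
Hypothesis m2 : 2 <= m.

Let n0 : 0 < n. Proof. by case: hm => ->; lia. Qed.
Let nm2 : 2 <= n - m. Proof. by case: hm => ->; lia. Qed.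

Lemma exS0 : exists S0 : mono, #|S0| = m.
Proof.
have : 0 < #|[set S : mono | #|S| == m]|.
  by rewrite card_draws card_ord bin_gt0; case: hm => ->; lia.
by case/card_gt0P=> S; rewrite inE => /eqP; exists S.
Qed.

Lemma cardC (S : mono) : #|~: S| = n - #|S|.
Proof. by rewrite cardsCs setCK card_ord. Qed.

Lemma perfect_ASm (S : mono) : #|S| = m -> perfect 2 (AS S).
Proof. by move=> hS; apply: perfect_AS; rewrite ?cardC hS. Qed.

Lemma Nperf_val : Nperf n 2 = 'C(n, 2) - m * (n - m).
Proof.
have [S0 hS0] := exS0.
have cA := card_AS S0; rewrite hS0 in cA.
apply/eqP; rewrite eqn_leq; apply/andP; split.
  have := @minbig _ (fun A : {set mono} => perfect 2 A) (fun A => #|A|) (2 ^ n).+1 (AS S0) (perfect_ASm hS0).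
  by rewrite /Nperf => h; apply: leq_trans h _; lia.
rewrite /Nperf; apply: (big_ind (fun x => 'C(n, 2) - m * (n - m) <= x)).
- have : #|AS S0| <= #|powerset [set: T]|.
    by apply: subset_leq_card; apply/subsetP=> x _; rewrite inE subsetT.
  by rewrite card_powerset cardsT card_ord; lia.
- by move=> x y hx hy; rewrite leq_min hx hy.
- move=> A pA; have [h _] := mantel (AS_sub' pA) (perfect_P3 pA) hm n0; lia.
Qed.


Lemma facet2 (G : {set mono}) : G \subset sm n 2 ->
  [set F in facet_cx G | #|F| == 2] = G.
Proof.
move=> G2; apply/setP=> F; rewrite !inE; apply/idP/idP.
  case/andP=> /existsP[g /andP[gG Fg]] /eqP F2.
  have g2 : #|g| = 2 by apply/eqP; rewrite -in_sm (subsetP G2).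
  suff -> : F = g by [].
  by apply/eqP; rewrite eqEcard Fg g2 F2 leqnn.
move=> FG; rewrite -in_sm (subsetP G2) // andbT.
by apply/existsP; exists F; rewrite FG subxx.
Qed.

Lemma sr2 (G : {set mono}) : G \subset sm n 2 ->
  [set F in sr_cx G | #|F| == 2] = sm n 2 :\: G.
Proof.
move=> G2; apply/setP=> F; rewrite !inE; case F2: (#|F| == 2); rewrite ?andbF ?andbT //.
congr negb; apply/existsP/idP=> [[h /andP[hG hF]]|FG].
  have h2 : #|h| = 2 by apply/eqP; rewrite -in_sm (subsetP G2).
  suff <- : h = F by [].
  by apply/eqP; rewrite eqEcard hF h2 (eqP F2) leqnn.
by exists F; rewrite FG subxx.
Qed.

Lemma fnum2 (G : {set mono}) : G \subset sm n 2 ->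
  fnum (facet_cx G) 2 = #|G| /\ fnum (sr_cx G) 2 = 'C(n, 2) - #|G|.
Proof.
move=> G2; rewrite /fnum facet2 // sr2 // cardsD (setIidPr G2) card_sm2; split=> //.
Qed.

Lemma U2_char G : (G \in U2 n) = [&& G \subset sm n 2, (2 * #|G| == 'C(n, 2)) &
    [exists S : mono, (#|S| == m) && (AS S \subset G)]].
Proof.
have [S0 hS0] := exS0.
have cA := card_AS S0; rewrite hS0 in cA.
rewrite inE; apply/and3P/and3P=> -[G2 h1 h2]; split=> //.
- have [f1 f2] := fnum2 G2.
  have n2 : 2 < n.+1 by case: hm => ->; lia.
  move/forallP: h1 => /(_ (Ordinal n2)) /=; rewrite f1 f2 => /eqP e.
  have : #|G| <= 'C(n, 2) by rewrite -card_sm2 subset_leq_card.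
  move=> le; apply/eqP; rewrite mul2n -addnn {2}e subnKC //.
- case/existsP: h2 => A /and3P[AG pA /eqP cardA].
  rewrite Nperf_val in cardA.
  have [_ h] := mantel (AS_sub' pA) (perfect_P3 pA) hm n0.
  have [S [hS AE]] : exists S : mono, #|S| = m /\ A = AS S by apply: h; lia.
  by apply/existsP; exists S; rewrite hS eqxx -AE.
- case/existsP: h2 => S /andP[/eqP hS ASG].
  have [f1 f2] := fnum2 G2.
  apply/forallP=> i; case: (i =P (2 : nat) :> nat) => [->|i2].
    by rewrite f1 f2; apply/eqP; lia.
  apply/eqP; rewrite /fnum; congr (#|pred_of_set _|); apply/setP=> F; rewrite !inE.
  case: (#|F| =P i) => [hF|]; rewrite ?andbF ?andbT //.
  have [le1|ge3] : #|F| <= 1 \/ 3 <= #|F| by lia.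
    have -> : inI G F = false.
      apply/negbTE/existsP=> -[h /andP[hG hF']].
      have : #|h| <= #|F| by apply: subset_leq_card.
      by rewrite (eqP (eq_trans (esym (in_sm 2 h)) (subsetP G2 h hG))); lia.
    have [x xF] : exists x, F \subset [set x].
      case: (#|F| =P 1) => [/eqP/cards1P[x ->]|F1]; first by exists x.
      have : #|F| == 0 by lia.
      by rewrite cards_eq0 => /eqP ->; exists (Ordinal n0); exact: sub0set.
    have c1 : 2 <= #|S| by rewrite hS.
    have c2 : 2 <= #|~: S| by rewrite cardC hS.
    have [g gA xg] := cover c1 c2 x.
    apply/existsP; exists g; rewrite (subsetP ASG) //=.
    by apply: subset_trans xF _; rewrite sub1set.
  have -> : inI G F = true.
    have [g gA gF] := part3 S ge3.
    by apply/existsP; exists g; rewrite gF (subsetP ASG).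
  apply/negbTE/existsP=> -[g /andP[gG Fg]].
  have : #|F| <= #|g| by apply: subset_leq_card.
  by rewrite (eqP (eq_trans (esym (in_sm 2 g)) (subsetP G2 g gG))); lia.
- case/existsP: h2 => S /andP[/eqP hS ASG].
  apply/existsP; exists (AS S); rewrite ASG perfect_ASm //= Nperf_val.
  by apply/eqP; rewrite -(card_AS S) hS addnK.
Qed.


Definition FS (S : mono) : {set {set mono}} :=
  [set G : {set mono} | [&& G \subset sm n 2, 2 * #|G| == 'C(n, 2) & AS S \subset G]].
Definition PP : {set mono} := [set S : mono | #|S| == m].

Lemma U2_union G : (G \in U2 n) = [exists S in PP, G \in FS S].
Proof.
rewrite U2_char; apply/and3P/existsP.
  by case=> G2 h /existsP[S /andP[hS hG]]; exists S; rewrite !inE hS G2 h hG.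
case=> S; rewrite !inE => /andP[hS /and3P[G2 h hG]]; split=> //.
by apply/existsP; exists S; rewrite hS.
Qed.

Lemma FS_C (S : mono) : FS (~: S) = FS S.
Proof. by apply/setP=> G; rewrite !inE AS_C. Qed.

Lemma pairsP (X Y : mono) e : e \in pairs X Y ->
  exists x y, [/\ x \in X, y \in Y & e = [set x; y]].
Proof. by case/imsetP=> -[x y]; rewrite inE /= => /andP[xX yY] ->; exists x, y. Qed.

Variable k : nat.
Hypothesis hk : 2 * ('C(n, 2) - m * (n - m) + k) = 'C(n, 2).
Hypothesis hmk : m = k + k.
Hypothesis hk0 : 0 < k.

Lemma card_FS (S : mono) : #|S| = m -> #|FS S| = 'C(m * (n - m), k).
Proof.
move=> hS.
have cA := card_AS S; rewrite hS in cA.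
have disj : forall X : {set mono}, X \subset pairs S (~: S) -> AS S :&: X = set0.
  move=> X XP; apply/setP=> e; rewrite inE [RHS]inE; apply/negbTE/andP=> -[eA eX].
  by move: (subsetP XP e eX); rewrite -AS_compl in_setD eA.
pose D := [set X : {set mono} | X \subset pairs S (~: S) & #|X| == k].
have -> : FS S = [set AS S :|: X | X in D].
  apply/setP=> G; apply/idP/imsetP.
    rewrite inE => /and3P[G2 /eqP h ASG]; exists (G :\: AS S).
      rewrite inE -AS_compl setSD //=.
      by rewrite cardsD (setIidPr ASG); apply/eqP; lia.
    apply/setP=> e; rewrite in_setU in_setD; case: (e \in AS S) /idP => //= eA.
    by rewrite (subsetP ASG).
  case=> X; rewrite inE => /andP[XP /eqP hX] ->.
  have hA : #|AS S| = 'C(n, 2) - m * (n - m) by rewrite -cA addnK.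
  rewrite inE cardsU disj // cards0 subn0 hX hA hk eqxx subsetUl andbT andbT.
  rewrite subUset AS_sub.
  by apply: subset_trans XP _; rewrite -AS_compl subsetDl.
rewrite card_in_imset; last first.
  move=> X1 X2; rewrite !inE => /andP[X1P _] /andP[X2P _] e.
  have h : forall X : {set mono}, AS S :&: X = set0 -> (AS S :|: X) :\: AS S = X.
    move=> X dX; apply/setP=> z; rewrite in_setD in_setU; case zX: (z \in X); rewrite ?orbT ?orbF ?andbT ?andNb //.
    have : z \notin AS S :&: X by rewrite dX inE.
    by rewrite in_setI zX andbT.
  by rewrite -(h _ (disj _ X1P)) e h // disj.
by rewrite cards_draws pairs_card ?setCK // cardC hS.
Qed.

Lemma overlap (S T : mono) G : #|S| = m -> #|T| = m -> G \in FS S -> G \in FS T ->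
  T = S \/ T = ~: S.
Proof.
move=> hS hT; rewrite !inE => /and3P[G2 /eqP hG ASG] /and3P[_ _ ATG].
have cA := card_AS S; rewrite hS in cA.
pose X := G :\: AS S.
have cX : #|X| = k by rewrite cardsD (setIidPr ASG); lia.
pose p1 := pairs (T :&: S) (T :&: ~: S).
pose p2 := pairs (~: T :&: S) (~: T :&: ~: S).
have inX : forall (U : mono) x y, x \in U -> y \in U -> x \in S -> y \notin S ->
    (U = T \/ U = ~: T) -> [set x; y] \in X.
  move=> U x y xU yU xS yS hU.
  have xy : x != y by apply/eqP=> exy; subst y; rewrite xS in yS.
  have e2 : [set x; y] \in AS T.
    rewrite !inE cards2 xy /=; case: hU => hU; subst U.
      by rewrite subUset !sub1set xU yU.
    by rewrite !subUset !sub1set xU yU orbT.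
  rewrite inE (subsetP ATG) // andbT.
  have : [set x; y] \in pairs S (~: S).
    by apply/imsetP; exists (x, y); rewrite // inE /= xS inE yS.
  by rewrite -AS_compl inE => /andP[].
have s1 : p1 \subset X.
  apply/subsetP=> e /pairsP[x [y [xT yT ->]]].
  move: xT yT; rewrite !in_setI in_setC => /andP[xT xS] /andP[yT yS].
  by apply: (inX T) => //; left.
have s2 : p2 \subset X.
  apply/subsetP=> e /pairsP[x [y [xT yT ->]]].
  move: xT yT; rewrite !in_setI => /andP[xT xS] /andP[yT yS].
  rewrite in_setC in yS.
  by apply: (inX (~: T)) => //; right.
have d12 : p1 :&: p2 = set0.
  apply/setP=> e; rewrite inE [RHS]inE; apply/negbTE/andP=> -[/pairsP[x [y [xT _ ->]]]].
  case/pairsP=> x' [y' [x'T y'T ee]].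
  have : x \in [set x'; y'] by rewrite -ee !inE eqxx.
  move: xT x'T y'T; rewrite !in_setI !in_setC => /andP[xT _] /andP[x'T _] /andP[y'T _].
  by rewrite !inE => /orP[]/eqP ex; subst; [rewrite xT in x'T | rewrite xT in y'T].
have c12 : #|p1| + #|p2| <= k.
  have := cardsU p1 p2; rewrite d12 cards0 subn0 => <-; rewrite -cX; apply: subset_leq_card.
  by rewrite subUset s1 s2.
rewrite !pairs_card in c12; first last.
- by apply/subsetP=> x; rewrite !inE => /andP[_ ->]; rewrite andbF.
- by apply/subsetP=> x; rewrite !inE => /andP[_ ->]; rewrite andbF.
have e1 : #|T :&: S| + #|T :&: ~: S| = m by rewrite -setDE cardsID hT.
have e2 : #|T :&: S| + #|~: T :&: S| = m.
  by rewrite (setIC T S) (setIC (~: T) S) -setDE cardsID hS.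
have e3 : #|~: T :&: S| + #|~: T :&: ~: S| = n - m by rewrite -setDE cardsID cardC hT.

have e3' : #|~: T :&: S| + #|~: T :&: ~: S| = k + k \/
           #|~: T :&: S| + #|~: T :&: ~: S| = k + k + 1.
  by rewrite e3; case: hm => ->; lia.
rewrite hmk in e1 e2.
case: (ar3 hk0 e1 e2 e3' c12) => [/eqP|[/eqP a0 /eqP d0]].
  rewrite cards_eq0 => /eqP b0; left; apply/eqP; rewrite eqEcard hS hT leqnn andbT.
  apply/subsetP=> x xT; apply/negPn/negP=> xS.
  have : x \in T :&: ~: S by rewrite in_setI in_setC xT.
  by rewrite b0 inE.
move: a0 d0; rewrite !cards_eq0 => /eqP a0 /eqP d0; right.
apply/setP=> x; rewrite in_setC; apply/idP/idP=> [xT|xS].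
  apply/negP=> xS; have : x \in T :&: S by rewrite in_setI xT.
  by rewrite a0 inE.
apply/negPn/negP=> xT; have : x \in ~: T :&: ~: S by rewrite in_setI !in_setC xT.
by rewrite d0 inE.
Qed.


Lemma card_sumb (U : finType) (A : {set U}) : #|A| = \sum_x (x \in A).
Proof.
by rewrite -sum1_card big_mkcond /=; apply: eq_bigr => x _; case: (x \in A).
Qed.

Lemma count_main c0 : (forall G, G \in U2 n -> #|[set S in PP | G \in FS S]| = c0) ->
  #|U2 n| * c0 = 'C(n, m) * 'C(m * (n - m), k).
Proof.
move=> hc.
have L : \sum_(S in PP) #|FS S| = 'C(n, m) * 'C(m * (n - m), k).
  rewrite (eq_bigr (fun _ => 'C(m * (n - m), k))); last first.
    by move=> S; rewrite inE => /eqP hS; rewrite card_FS.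
  by rewrite sum_nat_const /PP card_draws card_ord.
rewrite -L.
under eq_bigr => S _ do rewrite card_sumb.
rewrite exchange_big /=.
rewrite (eq_bigr (fun G => if G \in U2 n then c0 else 0)); last first.
  move=> G _; rewrite -card_sep; case: ifP => hG; first exact: hc.
  apply/eqP; rewrite cards_eq0; apply/eqP/setP=> S; rewrite in_set0 inE.
  apply/negbTE/andP=> -[SP GS]; move: hG; rewrite U2_union.
  by move/negbT/negP; apply; apply/existsP; exists S; rewrite SP GS.
by rewrite -big_mkcond /= sum_nat_const.
Qed.

Lemma count_even : n = m + m -> #|U2 n| * 2 = 'C(n, m) * 'C(m * (n - m), k).
Proof.
move=> hn; apply: count_main => G; rewrite U2_union => /existsP[S0 /andP[S0P GS0]].
move: S0P; rewrite inE => /eqP hS0.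
have hC : #|~: S0| = m by rewrite cardC hS0 hn; lia.
have -> : [set S in PP | G \in FS S] = [set S0; ~: S0].
  apply/setP=> S; rewrite !inE; apply/idP/idP.
    case/andP=> /eqP hS GS; have GS' : G \in FS S by rewrite inE.
    case: (overlap hS0 hS GS0 GS') => ->; rewrite eqxx ?orbT //.
  case/orP=> /eqP ->; first by rewrite hS0 eqxx; move: GS0; rewrite !inE.
  by rewrite hC eqxx AS_C; move: GS0; rewrite !inE.
rewrite cards2; case: eqP => // e.
have x0 : T := Ordinal n0.
have := congr1 (fun A : mono => x0 \in A) e => /=; rewrite in_setC.
by case: (x0 \in S0).
Qed.

Lemma count_odd : n = m + m + 1 -> #|U2 n| * 1 = 'C(n, m) * 'C(m * (n - m), k).
Proof.
move=> hn; apply: count_main => G; rewrite U2_union => /existsP[S0 /andP[S0P GS0]].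
move: S0P; rewrite inE => /eqP hS0.
have hC : #|~: S0| = m + 1 by rewrite cardC hS0 hn; lia.
have -> : [set S in PP | G \in FS S] = [set S0].
  apply/setP=> S; rewrite !inE; apply/idP/idP.
    case/andP=> /eqP hS GS; have GS' : G \in FS S by rewrite inE.
    case: (overlap hS0 hS GS0 GS') => e; subst S.
      by rewrite eqxx.
    by move: hS; rewrite hC; lia.
  by move/eqP=> ->; rewrite hS0 eqxx; move: GS0; rewrite !inE.
by rewrite cards1.
Qed.


Lemma U2_two G : 2 < n.+1 -> G \in U2 n -> 2 * #|G| = 'C(n, 2).
Proof.
move=> n2; rewrite inE => /and3P[G2 h1 _].
have [f1 f2] := fnum2 G2.
move/forallP: h1 => /(_ (Ordinal n2)) /=; rewrite f1 f2 => /eqP e.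
have le : #|G| <= 'C(n, 2) by rewrite -card_sm2 subset_leq_card.
by rewrite mul2n -addnn {2}e subnKC.
Qed.

End Count.

End Work.

Theorem proposition4p1 (n : nat) (hn : 4 <= n) :
  (forall k : nat, 0 < k -> n = 4 * k ->
     2 * #|U2 n| = 'C(4 * k, 2 * k) * 'C(4 * k ^ 2, k)) /\
  (forall k : nat, 0 < k -> n = 4 * k + 1 ->
     #|U2 n| = 'C(4 * k + 1, 2 * k) * 'C(4 * k ^ 2 + 2 * k, k)) /\
  ((forall k : nat, 0 < k -> n <> 4 * k /\ n <> 4 * k + 1) -> #|U2 n| = 0).
Proof.
have C2 := bin2x n.
split; [|split].
- move=> k k0 nk.
  have hm : n = (k + k) + (k + k) \/ n = (k + k) + (k + k) + 1 by left; lia.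
  have m2 : 2 <= k + k by lia.
  have e1 : n - (k + k) = k + k by lia.
  have hk : 2 * ('C(n, 2) - (k + k) * (n - (k + k)) + k) = 'C(n, 2).
    rewrite e1; rewrite nk in C2 *; nia.
  have := @count_even n (k + k) hm m2 k hk erefl k0 ltac:(lia).
  rewrite e1 nk mulnC => ->; congr (_ * _); first by congr 'C(_, _); lia.
  by congr 'C(_, _); lia.
- move=> k k0 nk.
  have hm : n = (k + k) + (k + k) \/ n = (k + k) + (k + k) + 1 by right; lia.
  have m2 : 2 <= k + k by lia.
  have e1 : n - (k + k) = k + k + 1 by lia.
  have hk : 2 * ('C(n, 2) - (k + k) * (n - (k + k)) + k) = 'C(n, 2).
    rewrite e1; rewrite nk in C2 *; nia.
  have := @count_odd n (k + k) hm m2 k hk erefl k0 ltac:(lia).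
  rewrite e1 nk muln1 => ->; congr (_ * _); first by congr 'C(_, _); lia.
  by congr 'C(_, _); lia.
- move=> hnk; apply/eqP; rewrite cards_eq0; apply/eqP/setP=> G; rewrite in_set0.
  apply/negP=> GU; have := U2_two (ltac:(lia) : 2 < n.+1) GU => e.
  have := hnk (n %/ 4) ltac:(rewrite divn_gt0 //) => -[h0 h1].
  have nd := divn_eq n 4.
  have : n %% 4 < 4 by rewrite ltn_mod.
  nia.
Qed.
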